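(* Let $f(z)=\sum_{n\ge1} f_n z^n$ be a formal power series over $\mathbb{C}$ with $f_1\neq 0$, and let $f'(z)$ be its formal derivative. The Riordan matrix $\left(\frac{z f'(z)}{f(z)}, f(z)\right)$ (an element of the Hitting time subgroup) is a pseudo-involution if and only if $-f(-f(z))=z$.
   Context: A Riordan matrix is a pair $(g(z),f(z))$ of formal power series over $\mathbb{C}$ with $g(z)=\sum_{n\ge 0} g_n z^n$, $g_0\neq 0$, and $f(z)=\sum_{n\ge 1} f_n z^n$ with $f_1\neq 0$; it represents the infinite lower-triangular matrix whose $k$-th column ($k\ge 0$) has generating function $g(z)f(z)^k$. Riordan matrices form a group under matrix multiplication, where $(g(z),f(z))*(h(z),l(z))=(g(z)h(f(z)),\,l(f(z)))$ and the identity is $(1,z)$. Let $M=(1,-z)$. A Riordan matrix $L$ is called a pseudo-involution if $(L*M)*(L*M)=(1,z)$. The quotient $z f'(z)/f(z)$ is the formal power series obtained by cancelling the factor $z$ (it has constant term $1$). *)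

(* Defs.v *)
From HB Require Import structures.
From mathcomp Require Import all_boot all_order all_algebra.
From mathcomp Require Import complex reals.
Set Implicit Arguments. Unset Strict Implicit. Unset Printing Implicit Defensive.
Import Order.TTheory GRing.Theory Num.Theory.
Local Open Scope ring_scope.

Section FPS.
Variable C : fieldType.

Definition fps := nat -> C.

Definition fps_const (c : C) : fps := fun n => if n == 0%N then c else 0.
Definition fps_one : fps := fps_const 1.
Definition fps_X : fps := fun n => if n == 1%N then 1 else 0.
Definition fps_opp (a : fps) : fps := fun n => - a n.

Definition fps_mul (a b : fps) : fps :=
  fun n => \sum_(i < n.+1) a i * b (n - i)%N.

Definition fps_pow (a : fps) (k : nat) : fps := iter k (fps_mul a) fps_one.

(* composition g(f(z)); meaningful when f 0 = 0 *)
Definition fps_comp (g f : fps) : fps :=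
  fun n => \sum_(k < n.+1) g k * fps_pow f k n.

Definition fps_deriv (a : fps) : fps := fun n => (n.+1)%:R * a n.+1.

Definition fps_divX (a : fps) : fps := fun n => a n.+1.

(* multiplicative inverse (for a 0 <> 0): b_0 = 1/a_0,
   b_n = -(1/a_0) sum_{i=1}^n a_i b_{n-i} *)
Fixpoint fps_inv_upto (a : fps) (n : nat) : seq C :=
  match n with
  | 0%N => [:: (a 0%N)^-1]
  | n'.+1 => let s := fps_inv_upto a n' in
      rcons s (- (a 0%N)^-1 *
               \sum_(j < n'.+1) a j.+1 * nth 0 s (n' - j)%N)
  end.
Definition fps_inv (a : fps) : fps := fun n => nth 0 (fps_inv_upto a n) n.

(* z f'(z) / f(z), computed as f'(z) / (f(z)/z) *)
Definition zfprime_over_f (f : fps) : fps :=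
  fps_mul (fps_deriv f) (fps_inv (fps_divX f)).

Definition riordan := (fps * fps)%type.

Definition riordan_mul (A B : riordan) : riordan :=
  (fps_mul A.1 (fps_comp B.1 A.2), fps_comp B.2 A.2).

Definition riordan_id : riordan := (fps_one, fps_X).

Definition riordan_M : riordan := (fps_one, fps_opp fps_X).

Definition pseudo_involution (L : riordan) : Prop :=
  riordan_mul (riordan_mul L riordan_M) (riordan_mul L riordan_M) = riordan_id.

End FPS.

(* Main.v *)
Require Import Defs.
From HB Require Import structures.
From mathcomp Require Import all_boot all_order all_algebra.
From mathcomp Require Import complex reals.
From Stdlib Require Import FunctionalExtensionality.
From mathcomp Require Import ring.
Import Order.TTheory GRing.Theory Num.Theory.
Local Open Scope ring_scope.

Set Implicit Arguments. Unset Strict Implicit.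
Section Aux.
Variable C : fieldType.
Implicit Types (a b g f : fps C) (p q r : {poly C}).

Definition agree (m : nat) (a : fps C) (p : {poly C}) :=
  forall i, (i < m)%N -> a i = p`_i.
Definition eqm (m : nat) (p q : {poly C}) :=
  forall i, (i < m)%N -> p`_i = q`_i.

Lemma sum_extend (F : nat -> C) (a b : nat) : (a <= b)%N ->
  (forall k, (a <= k)%N -> (k < b)%N -> F k = 0) ->
  \sum_(k < a) F k = \sum_(k < b) F k.
Proof.
move=> ab H0; rewrite -!(big_mkord xpredT) [RHS](big_cat_nat (n:=a)) // /=.
rewrite [X in _ = _ + X]big_nat_cond [X in _ = _ + X]big1 ?addr0 //.
by move=> k /andP[/andP[h1 h2] _]; apply: H0.
Qed.

Lemma coef_pow_small r k i : r`_0 = 0 -> (i < k)%N -> (r ^+ k)`_i = 0.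
Proof.
move=> r0 ik.
have Hr : r = drop_poly 1 r * 'X.
  have E := poly_take_drop 1 r.
  have T0 : take_poly 1 r = 0.
    by apply/polyP => j; rewrite coef_take_poly coef0; case: j => //= _.
  by rewrite T0 add0r expr1 in E; rewrite E.
by rewrite Hr exprMn coefMXn ik.
Qed.

Lemma coef_comp_small p r i : r`_0 = 0 ->
  (p \Po r)`_i = \sum_(k < i.+1) p`_k * (r ^+ k)`_i.
Proof.
move=> r0; rewrite comp_polyE coef_sum.
under eq_bigr do rewrite coefZ.
rewrite (@sum_extend (fun k => p`_k * (r ^+ k)`_i) _ _ (leq_addr i.+1 (size p))).
  rewrite [RHS](@sum_extend (fun k => p`_k * (r ^+ k)`_i) _ _ (leq_addl (size p) i.+1)) //.
  by move=> k h1 _; rewrite coef_pow_small ?mulr0.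
by move=> k h1 _; rewrite nth_default ?mul0r.
Qed.

Lemma eqm_refl m p : eqm m p p. Proof. by []. Qed.
Lemma eqm_sym m p q : eqm m p q -> eqm m q p.
Proof. by move=> h i hi; rewrite h. Qed.
Lemma eqm_trans m p q r : eqm m p q -> eqm m q r -> eqm m p r.
Proof. by move=> h1 h2 i hi; rewrite h1 ?h2. Qed.
Lemma eqm_le m m' p q : (m' <= m)%N -> eqm m p q -> eqm m' p q.
Proof. by move=> le h i hi; apply: h; apply: leq_trans le. Qed.

Lemma eqm_mul m p p' q q' : eqm m p p' -> eqm m q q' -> eqm m (p * q) (p' * q').
Proof.
move=> h1 h2 i hi; rewrite !coefM; apply: eq_bigr => j _.
have jl := ltn_ord j.
have h3 : (j < m)%N by apply: leq_ltn_trans hi.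
have h4 : (i - j < m)%N by apply: leq_ltn_trans hi; apply: leq_subr.
by rewrite h1 ?h2.
Qed.

Lemma eqm_pow m p p' k : eqm m p p' -> eqm m (p ^+ k) (p' ^+ k).
Proof. by move=> h; elim: k => [|k IH]; rewrite ?expr0 // !exprS; apply: eqm_mul. Qed.

Lemma eqm_comp m p p' q q' : eqm m p p' -> eqm m q q' -> q`_0 = 0 -> q'`_0 = 0 ->
  eqm m (p \Po q) (p' \Po q').
Proof.
move=> h1 h2 z1 z2 i hi; rewrite !coef_comp_small //; apply: eq_bigr => k _.
have kl := ltn_ord k.
have h3 : (k < m)%N by apply: leq_ltn_trans hi.
by rewrite h1 // (eqm_pow k h2 hi).
Qed.

Lemma eqm_deriv m p q : eqm m.+1 p q -> eqm m p^`() q^`().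
Proof. by move=> h i hi; rewrite !coef_deriv h. Qed.

Lemma eqm_shiftX m p q : eqm m.+1 (p * 'X) (q * 'X) -> eqm m p q.
Proof. by move=> h i hi; have := h i.+1 hi; rewrite !coefMX. Qed.

Lemma agree_eqm m a p q : agree m a p -> eqm m p q -> agree m a q.
Proof. by move=> h1 h2 i hi; rewrite h1 ?h2. Qed.

Lemma agree_uniq m a b p n : agree m a p -> agree m b p -> (n < m)%N -> a n = b n.
Proof. by move=> h1 h2 hn; rewrite h1 ?h2. Qed.

Lemma agree_poly m a : agree m a (\poly_(i < m) a i).
Proof. by move=> i hi; rewrite coef_poly hi. Qed.

Lemma agree_mul m a b p q : agree m a p -> agree m b q -> agree m (fps_mul a b) (p * q).
Proof.
move=> h1 h2 i hi; rewrite coefM /fps_mul; apply: eq_bigr => j _.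
have jl := ltn_ord j.
have h3 : (j < m)%N by apply: leq_ltn_trans hi.
have h4 : (i - j < m)%N by apply: leq_ltn_trans hi; apply: leq_subr.
by rewrite h1 ?h2.
Qed.

Lemma agree_one m : agree m (fps_one C) 1.
Proof. by move=> i _; rewrite coef1 /fps_one /fps_const; case: (i == 0%N). Qed.

Lemma agree_X m : agree m (fps_X C) 'X.
Proof. by move=> i _; rewrite coefX /fps_X; case: (i == 1%N). Qed.

Lemma agree_opp m a p : agree m a p -> agree m (fps_opp a) (- p).
Proof. by move=> h i hi; rewrite coefN /fps_opp h. Qed.

Lemma agree_pow m a p k : agree m a p -> agree m (fps_pow a k) (p ^+ k).
Proof.
move=> h; elim: k => [|k IH]; first by rewrite expr0; apply: agree_one.
by rewrite exprS; apply: agree_mul.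
Qed.

Lemma agree_comp m g f p q : agree m g p -> agree m f q -> q`_0 = 0 ->
  agree m (fps_comp g f) (p \Po q).
Proof.
move=> h1 h2 q0 i hi; rewrite coef_comp_small // /fps_comp; apply: eq_bigr => k _.
have kl := ltn_ord k.
have h3 : (k < m)%N by apply: leq_ltn_trans hi.
by rewrite h1 // (agree_pow k h2 hi).
Qed.

Lemma agree_deriv m a p : agree m.+1 a p -> agree m (fps_deriv a) p^`().
Proof. by move=> h i hi; rewrite coef_deriv /fps_deriv h // mulr_natl. Qed.

Lemma agree_divX m a p : agree m.+1 a p -> agree m (fps_divX a) (drop_poly 1 p).
Proof. by move=> h i hi; rewrite coef_drop_poly addn1 /fps_divX h. Qed.

Lemma inv_upto_size a n : size (fps_inv_upto a n) = n.+1.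
Proof. by elim: n => //= n IH; rewrite size_rcons IH. Qed.

Lemma inv_upto_prefix a n i : (i <= n)%N -> nth 0 (fps_inv_upto a n) i = fps_inv a i.
Proof.
elim: n => [|n IH]; first by rewrite leqn0 => /eqP ->.
rewrite leq_eqVlt => /orP[/eqP -> //|hi].
by rewrite /= nth_rcons inv_upto_size hi IH.
Qed.

Lemma fps_inv_S a n : fps_inv a n.+1 =
  - (a 0%N)^-1 * \sum_(j < n.+1) a j.+1 * fps_inv a (n - j)%N.
Proof.
rewrite {1}/fps_inv /= nth_rcons inv_upto_size ltnn eqxx.
congr (_ * _); apply: eq_bigr => j _; rewrite inv_upto_prefix //; exact: leq_subr.
Qed.

Lemma fps_mul_inv a : a 0%N != 0 -> fps_mul a (fps_inv a) = fps_one C.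
Proof.
move=> a0; apply: functional_extensionality => n; case: n => [|n].
  by rewrite /fps_mul big_ord_recl big_ord0 addr0 /fps_inv /= mulfV.
rewrite /fps_mul big_ord_recl fps_inv_S /fps_one /fps_const /=.
set S := \sum_(i < n.+1) _.
have -> : S = \sum_(j < n.+1) a j.+1 * fps_inv a (n - j)%N.
  by apply: eq_bigr => j _.
by rewrite mulrA mulrN mulfV // mulN1r addNr.
Qed.

Lemma comp_polyNl p r : (- p) \Po r = - (p \Po r).
Proof. by rewrite -sub0r comp_polyB comp_polyC sub0r. Qed.

Lemma split_X r : r`_0 = 0 -> r = drop_poly 1 r * 'X.
Proof.
move=> r0; have E := poly_take_drop 1 r.
have T0 : take_poly 1 r = 0.
  by apply/polyP => j; rewrite coef_take_poly coef0; case: j => //= _.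
by rewrite T0 add0r expr1 in E; rewrite E.
Qed.

Lemma agree_fun_eqm m a p q : agree m a p -> agree m a q -> eqm m p q.
Proof. by move=> h1 h2 i hi; rewrite -h1 ?h2. Qed.

Lemma comp2_eq f : f 0%N = 0 ->
  fps_comp (fps_comp (fps_opp (fps_X C)) f) (fps_comp (fps_opp (fps_X C)) f)
  = fps_opp (fps_comp f (fps_opp f)).
Proof.
move=> f0; apply: functional_extensionality => n.
pose F := \poly_(i < n.+1) f i.
have aF : agree n.+1 f F by apply: agree_poly.
have F0 : F`_0 = 0 by rewrite coef_poly.
have H0 : (- F)`_0 = 0 by rewrite coefN F0 oppr0.
have aA2 : agree n.+1 (fps_comp (fps_opp (fps_X C)) f) (- F).
  have := agree_comp (agree_opp (@agree_X n.+1)) aF F0.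
  by rewrite comp_polyNl comp_polyX.
have h1 := agree_comp aA2 aA2 H0.
have h2 := agree_opp (agree_comp aF (agree_opp aF) H0).
by apply: (agree_uniq h1 _ (ltnSn n)); rewrite comp_polyNl.
Qed.

Lemma comp1_eq f : f 0%N = 0 -> f 1%N != 0 ->
  fps_comp (fps_comp (fps_opp (fps_X C)) f) (fps_comp (fps_opp (fps_X C)) f)
   = fps_X C ->
  fps_mul (fps_mul (zfprime_over_f f) (fps_comp (fps_one C) f))
    (fps_comp (fps_mul (zfprime_over_f f) (fps_comp (fps_one C) f))
       (fps_comp (fps_opp (fps_X C)) f)) = fps_one C.
Proof.
move=> f0 f1 HQ; apply: functional_extensionality => n.
pose m := n.+2.
pose F := \poly_(i < m.+1) f i.
have aF : agree m.+1 f F by apply: agree_poly.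
have aFm : agree m f F by move=> i hi; apply: aF; apply: ltnW.
have F0 : F`_0 = 0 by rewrite coef_poly.
pose H := - F.
have H0 : H`_0 = 0 by rewrite coefN F0 oppr0.
pose V := \poly_(i < m) (fps_inv (fps_divX f)) i.
have aV : agree m (fps_inv (fps_divX f)) V by apply: agree_poly.
pose D := drop_poly 1 F.
have FD : F = D * 'X by apply: split_X.
have aD : agree m (fps_divX f) D by apply: agree_divX.
pose G := F^`() * V.
have aG : agree m (zfprime_over_f f) G by apply: agree_mul => //; apply: agree_deriv.
have aA2 : agree m (fps_comp (fps_opp (fps_X C)) f) H.
  have := agree_comp (agree_opp (@agree_X m)) aFm F0.
  by rewrite comp_polyNl comp_polyX.
have aA1 : agree m (fps_mul (zfprime_over_f f) (fps_comp (fps_one C) f)) G.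
  have := agree_mul aG (agree_comp (@agree_one m) aFm F0).
  by rewrite -polyC1 comp_polyC polyC1 mulr1.
have aT := agree_mul aA1 (agree_comp aA1 aA2 H0).
have EHH : eqm m (H \Po H) 'X.
  apply: agree_fun_eqm (agree_comp aA2 aA2 H0) _; rewrite HQ; exact: agree_X.
have EDV : eqm m (D * V) 1.
  apply: agree_fun_eqm (agree_mul aD aV) _.
  rewrite fps_mul_inv; first exact: agree_one.
  by rewrite /fps_divX.
have E1 : eqm n.+1 ((F^`() \Po H) * F^`()) 1.
  have := eqm_deriv EHH.
  by rewrite deriv_comp derivX /H derivN comp_polyNl mulrNN.
have E2 : eqm n.+1 ((D \Po H) * D) 1.
  apply: eqm_shiftX; rewrite mul1r.
  have -> : (D \Po H) * D * 'X = H \Po H.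
    by rewrite {2}/H comp_polyNl FD comp_polyM comp_polyX mulrN opprK mulrA -FD.
  exact: EHH.
have E3 : eqm m ((D \Po H) * (V \Po H)) 1.
  have := eqm_comp EDV (@eqm_refl m H) H0 H0.
  by rewrite comp_polyM -polyC1 comp_polyC.
rewrite (aT n (leqW (ltnSn n))) (@agree_one n.+1 n (ltnSn n)).
suff : eqm n.+1 (G * (G \Po H)) 1 by move/(_ n (ltnSn n)).
apply: (@eqm_trans _ _ (G * (G \Po H) * ((D \Po H) * D))).
  by rewrite -{1}[G * (G \Po H)]mulr1; apply: eqm_mul => //; apply: eqm_sym.
have -> : G * (G \Po H) * ((D \Po H) * D) =
   ((F^`() \Po H) * F^`()) * (D * V) * ((D \Po H) * (V \Po H)).
  rewrite /G comp_polyM; ring.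
rewrite -(mulr1 1) -{1}(mulr1 1).
apply: eqm_mul; first apply: eqm_mul => //.
  exact: eqm_le EDV.
exact: eqm_le E3.
Qed.

End Aux.
Unset Implicit Arguments.
Theorem proposition19 (R : realType) (f : fps R[i]) :
  f 0%N = 0 -> f 1%N != 0 ->
  (pseudo_involution (zfprime_over_f f, f) <->
   fps_opp (fps_comp f (fps_opp f)) = fps_X R[i]).
Proof.
move=> f0 f1; rewrite /pseudo_involution /riordan_mul /riordan_M /riordan_id /=.
have C2 := comp2_eq f0.
split.
  by case=> _ <-; rewrite C2.
move=> h; have hq := h; rewrite -C2 in hq.
by rewrite (comp1_eq f0 f1 hq) hq.
Qed.
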